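(* Let $\mathcal{C}$ be an $[n,k]_q$ code and fix $i\in\{1,\dots,q-1\}$. There exists a non-zero vector $r=(r_1,\dots,r_{q-1})\in\mathbb{N}^{q-1}$ such that $$\sum_{j=1}^{q-1} r_j\left(a[\alpha^{i-j}]-b[\alpha^{i-j}]\right)\neq 0\quad\text{for all } a,b\in\mathcal{C} \text{ with } a\ne b$$ if and only if $V(a)\neq V(b)$ for all $a,b\in\mathcal{C}$ with $a\neq b$.
   Context: $q$ is a prime power, $\alpha$ a fixed primitive element of $\mathbb{F}_q$ (exponents of $\alpha$ are taken modulo $q-1$), $\mathbb{N}=\{0,1,2,\dots\}$. An $[n,k]_q$ code is a $k$-dimensional subspace of $\mathbb{F}_q^n$. For $c\in\mathbb{F}_q^n$ and $\beta\in\mathbb{F}_q$, $c[\beta]=|\{l: c_l=\beta\}|$, and $V(c)=(c[\alpha],c[\alpha^2],\dots,c[\alpha^{q-1}],c[0])$. *)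

(* Defs.v *)
From HB Require Import structures.
From mathcomp Require Import all_boot all_order all_algebra all_field.
Set Implicit Arguments. Unset Strict Implicit. Unset Printing Implicit Defensive.
Import GRing.Theory.
Local Open Scope ring_scope.

Definition wcount (F : finFieldType) (n : nat) (c : 'rV[F]_n) (beta : F) : nat :=
  #|[set l : 'I_n | c 0 l == beta]|.

(* V(c) = (c[alpha], c[alpha^2], ..., c[alpha^(q-1)], c[0]), q = #|F| *)
Definition Vvec (F : finFieldType) (alpha : F) (n : nat) (c : 'rV[F]_n) : seq nat :=
  rcons [seq wcount c (alpha ^+ j) | j <- iota 1 (#|F|.-1)] (wcount c 0).

(* alpha^(e) for an integer exponent e = i - j with 1 <= i, j <= q-1,
   exponent taken modulo q-1 *)
Definition alpha_pow_diff (F : finFieldType) (alpha : F) (i j : nat) : F :=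
  alpha ^+ ((i + #|F|.-1 - j) %% #|F|.-1).

(* Main.v *)
Require Import Defs.
From HB Require Import structures.
From mathcomp Require Import all_boot all_order all_algebra all_field.
From mathcomp Require Import zify.
Import GRing.Theory Num.Theory.
Set Implicit Arguments. Unset Strict Implicit.
Local Open Scope ring_scope.

Lemma key (M m : nat) (d : 'I_m -> int) :
  (forall j, `|d j| < M%:Z) -> \sum_(j < m) (M ^ j)%:Z * d j = 0 ->
  forall j, d j = 0.
Proof.
elim: m d => [|m IH] d hb hs j; first by case: j.
move: hs; rewrite big_ord_recl /= expn0 mul1r.
under eq_bigr => l _ do rewrite /bump /= expnS PoszM -mulrA.
rewrite -mulr_sumr => hs.
set S := \sum_(i < m) _ in hs.
have h0 := hb ord0; rewrite ltr_norml in h0; case/andP: h0 => h1 h2.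
have hS : S = 0 by nia.
have hd0 : d ord0 = 0 by lia.
case: (unliftP ord0 j) => [j' ->|->] //.
apply: (IH (fun l => d (lift ord0 l))) => // l; exact: hb.
Qed.

Lemma wcount_sum (F : finFieldType) n (c : 'rV[F]_n) :
  (\sum_(x : F) wcount c x)%N = n.
Proof.
rewrite -[n in RHS]card_ord -sum1_card (partition_big (fun l => c 0 l) predT) //=.
apply: eq_bigr => x _; rewrite /wcount -sum1_card; apply: eq_bigl => l.
by rewrite inE.
Qed.

Lemma wcount_le (F : finFieldType) n (c : 'rV[F]_n) x : (wcount c x <= n)%N.
Proof. by rewrite /wcount -[n in (_ <= n)%N]card_ord max_card. Qed.

Lemma Vvec_eq (F : finFieldType) (alpha : F) n (a b : 'rV[F]_n) :
  (forall x, x != 0 -> wcount a x = wcount b x) -> Vvec alpha a = Vvec alpha b.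
Proof.
move=> H.
have H0 : wcount a 0 = wcount b 0.
  have := wcount_sum a; rewrite -{2}(wcount_sum b) (bigD1 0) //= (bigD1 0 (P := predT)) //=.
  rewrite (eq_bigr (fun x => wcount b x)); last by move=> x /= /H.
  by move/eqP; rewrite eqn_add2r => /eqP.
rewrite /Vvec H0; congr rcons; apply: eq_map => j.
case: (eqVneq (alpha ^+ j) 0) => [->|nz]; [exact: H0 | exact: H].
Qed.

Lemma Vvec_inv (F : finFieldType) (alpha : F) n (a b : 'rV[F]_n) :
  (#|F|.-1).-primitive_root alpha ->
  Vvec alpha a = Vvec alpha b -> forall e, wcount a (alpha ^+ e) = wcount b (alpha ^+ e).
Proof.
move=> pa E e.
have hN : (0 < #|F|.-1)%N by apply: prim_order_gt0 pa.
have [m [hm1 hm2 ->]] : exists m, [/\ (1 <= m)%N, (m <= #|F|.-1)%N & alpha ^+ e = alpha ^+ m].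
  case: (posnP (e %% #|F|.-1)%N) => h.
    exists #|F|.-1; split => //; rewrite (prim_expr_order pa) -(prim_expr_mod pa) h expr0 //.
  exists (e %% #|F|.-1)%N; split => //; first by apply: ltnW; rewrite ltn_pmod.
  by rewrite (prim_expr_mod pa).
move: E; rewrite /Vvec => /eqP; rewrite eqseq_rcons => /andP [/eqP E _].
have := congr1 (fun s => nth 0%N s m.-1) E => /=.
have hlt : (m.-1 < #|F|.-1)%N by lia.
rewrite (nth_map 0%N) ?size_iota // (nth_map 0%N) ?size_iota // nth_iota //.
by rewrite add1n prednK.
Qed.

Lemma apd_onto (F : finFieldType) (alpha : F) i :
  (#|F|.-1).-primitive_root alpha -> (1 <= i <= #|F|.-1)%N ->
  forall x : F, x != 0 -> exists j : 'I_(#|F|.-1), alpha_pow_diff alpha i j.+1 = x.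
Proof.
move=> pa hi x nz.
have hN : (0 < #|F|.-1)%N by apply: prim_order_gt0 pa.
have xN : x ^+ #|F|.-1 = 1.
  apply: (mulIf nz); rewrite mul1r -exprSr prednK ?expf_card //.
  by apply/card_gt0P; exists 0.
have [e ->] := prim_rootP pa xN.
set N := #|F|.-1 in hN pa hi *.
set t := ((e + N - i) %% N)%N.
have ht : (t < N)%N by rewrite ltn_pmod.
have hj : (N - t - 1 < N)%N by lia.
exists (Ordinal hj) => /=.
rewrite /alpha_pow_diff -/N -(prim_expr_mod pa e).
have -> : (N - t - 1).+1 = (N - t)%N by lia.
have -> : (i + N - (N - t) = i + t)%N by lia.
rewrite /t modnDmr.
have -> : (i + (e + N - i) = e + N)%N by lia.
by rewrite modnDr.
Qed.

Theorem mainTheorem5 (F : finFieldType) (alpha : F)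
  (halpha : (#|F|.-1).-primitive_root alpha)
  (n k : nat) (C : {vspace 'rV[F]_n}) (hC : \dim C = k)
  (i : nat) (hi : (1 <= i <= #|F|.-1)%N) :
  (exists r : 'I_(#|F|.-1) -> nat,
      (exists j, r j != 0%N) /\
      (forall a b : 'rV[F]_n, a \in C -> b \in C -> a != b ->
         \sum_(j < #|F|.-1)
            (r j)%:Z * ((wcount a (alpha_pow_diff alpha i j.+1))%:Z
                        - (wcount b (alpha_pow_diff alpha i j.+1))%:Z) != 0))
  <->
  (forall a b : 'rV[F]_n, a \in C -> b \in C -> a != b ->
     Vvec alpha a != Vvec alpha b).
Proof.
have hN : (0 < #|F|.-1)%N by apply: prim_order_gt0 halpha.
split.
  move=> [r [_ H]] a b aC bC ab; apply/negP => /eqP E.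
  move: (H a b aC bC ab); rewrite big1 ?eqxx // => j _.
  by rewrite /alpha_pow_diff (Vvec_inv halpha E) subrr mulr0.
move=> HV; exists (fun j : 'I_(#|F|.-1) => (n.+1 ^ j)%N); split.
  by exists (Ordinal hN); rewrite -lt0n expn_gt0.
move=> a b aC bC ab; apply/eqP => S.
have := @key n.+1 _ (fun j : 'I_(#|F|.-1) => (wcount a (alpha_pow_diff alpha i j.+1))%:Z
                        - (wcount b (alpha_pow_diff alpha i j.+1))%:Z) _ S.
have hbd : forall j : 'I_(#|F|.-1), `|(wcount a (alpha_pow_diff alpha i j.+1))%:Z
                        - (wcount b (alpha_pow_diff alpha i j.+1))%:Z| < n.+1%:Z.
  move=> j; rewrite ltr_norml.
  have := wcount_le a (alpha_pow_diff alpha i j.+1).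
  have := wcount_le b (alpha_pow_diff alpha i j.+1).
  lia.
move=> /(_ hbd) Z.
apply: (negP (HV a b aC bC ab)); apply/eqP; apply: Vvec_eq => x nz.
have [j <-] := apd_onto halpha hi nz.
by have := Z j; move/eqP; rewrite subr_eq0 => /eqP [].
Qed.
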